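(* Let $(\mathcal{A},\cdot,[\cdot,\cdot],\alpha)$ be a Hom-Poisson algebra, let $\lambda\in\mathbb{C}$ be fixed, and let $D$ be a derivation of $(\mathcal{A},\cdot)$ such that $D\alpha=\alpha D$ and $D([x,y])=[D(x),y]+[x,D(y)]+\lambda[x,y]$ for all $x,y\in\mathcal{A}$. Define $x\circ y=x\cdot D(y)+\lambda\, x\cdot y$ for $x,y\in\mathcal{A}$. Then $(\mathcal{A},[\cdot,\cdot],\circ,\alpha)$ is a Hom Gel'fand-Dorfman bialgebra.
   Context: All vector spaces are over $\mathbb{C}$. A Hom-associative algebra is a vector space with a bilinear map $\cdot$ and linear map $\alpha$ such that $\alpha(x)\cdot(y\cdot z)=(x\cdot y)\cdot\alpha(z)$; it is commutative if $x\cdot y=y\cdot x$. A Hom-Lie algebra is a vector space with a bilinear map $[\cdot,\cdot]$ and linear map $\alpha$ with $[x,y]=-[y,x]$ and $[[x,y],\alpha(z)]+[[y,z],\alpha(x)]+[[z,x],\alpha(y)]=0$. A Hom-Poisson algebra is a vector space $\mathcal{A}$ with operations $\cdot$, $[\cdot,\cdot]$ and a linear endomorphism $\alpha$ such that $(\mathcal{A},\cdot,\alpha)$ is a commutative Hom-associative algebra, $(\mathcal{A},[\cdot,\cdot],\alpha)$ is a Hom-Lie algebra, and $[\alpha(x),y\cdot z]=\alpha(y)\cdot[x,z]+\alpha(z)\cdot[x,y]$ for all $x,y,z$. A derivation of $(\mathcal{A},\cdot)$ is a linear map $D$ with $D(x\cdot y)=D(x)\cdot y+x\cdot D(y)$.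 A Hom-Novikov algebra is a vector space with a bilinear operation $\circ$ and a linear endomorphism $\alpha$ such that $(x\circ y)\circ\alpha(z)-\alpha(x)\circ(y\circ z)=(y\circ x)\circ\alpha(z)-\alpha(y)\circ(x\circ z)$ and $(x\circ y)\circ\alpha(z)=(x\circ z)\circ\alpha(y)$. A Hom Gel'fand-Dorfman bialgebra is a vector space $\mathcal{A}$ with a linear endomorphism $\alpha$ and two bilinear operations $[\cdot,\cdot],\circ$ such that $(\mathcal{A},[\cdot,\cdot],\alpha)$ is a Hom-Lie algebra, $(\mathcal{A},\circ,\alpha)$ is a Hom-Novikov algebra, and $[x\circ y,\alpha(z)]-[x\circ z,\alpha(y)]+[x,y]\circ\alpha(z)-[x,z]\circ\alpha(y)-\alpha(x)\circ[y,z]=0$ for all $x,y,z$. *)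

(* Defs.v *)
From HB Require Import structures.
From mathcomp Require Import all_boot all_order all_algebra.
From mathcomp Require Import complex.
From mathcomp Require Import reals.
Set Implicit Arguments. Unset Strict Implicit. Unset Printing Implicit Defensive.
Import GRing.Theory.
Local Open Scope ring_scope.

Section HomDefs.
Variables (K : pzRingType) (V : lmodType K).

Definition is_bilinear (m : V -> V -> V) : Prop :=
  (forall a x y z, m (a *: x + y) z = a *: m x z + m y z) /\
  (forall a x y z, m x (a *: y + z) = a *: m x y + m x z).

Definition is_linear_map (f : V -> V) : Prop :=
  forall a x y, f (a *: x + y) = a *: f x + f y.

Definition HomAssociative (mul : V -> V -> V) (alpha : V -> V) : Prop :=
  forall x y z, mul (alpha x) (mul y z) = mul (mul x y) (alpha z).

Definition Commutative (mul : V -> V -> V) : Prop :=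
  forall x y, mul x y = mul y x.

Definition HomLie (br : V -> V -> V) (alpha : V -> V) : Prop :=
  is_bilinear br /\ is_linear_map alpha /\
  (forall x y, br x y = - br y x) /\
  (forall x y z, br (br x y) (alpha z) + br (br y z) (alpha x)
                 + br (br z x) (alpha y) = 0).

Definition HomPoisson (mul br : V -> V -> V) (alpha : V -> V) : Prop :=
  is_bilinear mul /\ is_linear_map alpha /\ Commutative mul /\
  HomAssociative mul alpha /\ HomLie br alpha /\
  (forall x y z, br (alpha x) (mul y z)
                    = mul (alpha y) (br x z) + mul (alpha z) (br x y)).

Definition is_derivation (mul : V -> V -> V) (D : V -> V) : Prop :=
  is_linear_map D /\ forall x y, D (mul x y) = mul (D x) y + mul x (D y).

Definition HomNovikov (circ : V -> V -> V) (alpha : V -> V) : Prop :=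
  [/\ is_bilinear circ, is_linear_map alpha,
      (forall x y z, circ (circ x y) (alpha z) - circ (alpha x) (circ y z)
                     = circ (circ y x) (alpha z) - circ (alpha y) (circ x z)) &
      (forall x y z, circ (circ x y) (alpha z) = circ (circ x z) (alpha y))].

Definition HomGelfandDorfman (br circ : V -> V -> V) (alpha : V -> V) : Prop :=
  [/\ HomLie br alpha, HomNovikov circ alpha &
      forall x y z, br (circ x y) (alpha z) - br (circ x z) (alpha y)
                    + circ (br x y) (alpha z) - circ (br x z) (alpha y)
                    - circ (alpha x) (br y z) = 0].

End HomDefs.

(* Main.v *)
Require Import Defs.
From HB Require Import structures.
From mathcomp Require Import all_boot all_order all_algebra.
From mathcomp Require Import complex reals.
Import GRing.Theory.
Local Open Scope ring_scope.
Local Open Scope complex_scope.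

Section Aux.
Variables (K : pzRingType) (V : lmodType K).

Lemma selfadd (x : V) : x = x + x -> x = 0.
Proof. by move=> h; have := congr1 (fun t => t - x) h => /=; rewrite subrr addrK. Qed.

Lemma bil_r0 (m : V -> V -> V) : is_bilinear m -> forall x, m x 0 = 0.
Proof.
case=> _ h x; have := h 1 x 0 0; rewrite !scale1r addr0; exact: selfadd.
Qed.
Lemma bil_l0 (m : V -> V -> V) : is_bilinear m -> forall x, m 0 x = 0.
Proof.
case=> h _ x; have := h 1 0 0 x; rewrite !scale1r addr0; exact: selfadd.
Qed.
Lemma bil_rD (m : V -> V -> V) : is_bilinear m -> forall x y z, m x (y + z) = m x y + m x z.
Proof. by case=> _ h x y z; rewrite -[y]scale1r h !scale1r. Qed.
Lemma bil_lD (m : V -> V -> V) : is_bilinear m -> forall x y z, m (x + y) z = m x z + m y z.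
Proof. by case=> h _ x y z; rewrite -[x]scale1r h !scale1r. Qed.
Lemma bil_rZ (m : V -> V -> V) : is_bilinear m -> forall a x y, m x (a *: y) = a *: m x y.
Proof. move=> hb a x y; have := hb.2 a x y 0; by rewrite addr0 bil_r0 // addr0. Qed.
Lemma bil_lZ (m : V -> V -> V) : is_bilinear m -> forall a x y, m (a *: x) y = a *: m x y.
Proof. move=> hb a x y; have := hb.1 a x 0 y; by rewrite addr0 bil_l0 // addr0. Qed.
Lemma bil_rN (m : V -> V -> V) : is_bilinear m -> forall x y, m x (- y) = - m x y.
Proof. by move=> hb x y; rewrite -scaleN1r bil_rZ // scaleN1r. Qed.
Lemma lin_D (f : V -> V) : is_linear_map f -> forall x y, f (x + y) = f x + f y.
Proof. by move=> h x y; rewrite -[x]scale1r h !scale1r. Qed.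
Lemma lin_0 (f : V -> V) : is_linear_map f -> f 0 = 0.
Proof. move=> h; have := @lin_D f h 0 0; rewrite addr0; exact: selfadd. Qed.
Lemma lin_Z (f : V -> V) : is_linear_map f -> forall a x, f (a *: x) = a *: f x.
Proof. by move=> h a x; have := h a x 0; rewrite addr0 lin_0 // addr0. Qed.
End Aux.
Arguments bil_r0 {K V m}. Arguments bil_l0 {K V m}. Arguments bil_rD {K V m}.
Arguments bil_lD {K V m}. Arguments bil_rZ {K V m}. Arguments bil_lZ {K V m}.
Arguments bil_rN {K V m}. Arguments lin_D {K V f}. Arguments lin_0 {K V f}.
Arguments lin_Z {K V f}.

Theorem theorem3p15 (R : realType) (V : lmodType R[i])
    (mul br : V -> V -> V) (alpha D : V -> V) (lambda : R[i]) :
  HomPoisson mul br alpha ->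
  is_derivation mul D ->
  (forall x, D (alpha x) = alpha (D x)) ->
  (forall x y, D (br x y) = br (D x) y + br x (D y) + lambda *: br x y) ->
  HomGelfandDorfman br (fun x y => mul x (D y) + lambda *: mul x y) alpha.
Proof.
move=> [mb [al [mC [mA [hL hP]]]]] [Dl Dm] Da Db.
have [bb [_ [bN bJ]]] := hL.
have mrD := bil_rD mb; have mlD := bil_lD mb; have mrZ := bil_rZ mb.
have mlZ := bil_lZ mb; have mrN := bil_rN mb.
have brD := bil_rD bb; have blD := bil_lD bb; have brZ := bil_rZ bb.
have blZ := bil_lZ bb; have brN := bil_rN bb.
have aD := lin_D al; have aZ := lin_Z al; have DD := lin_D Dl; have DZ := lin_Z Dl.
pose E y := D y + lambda *: y.
have El : is_linear_map E.
  by move=> a x y; rewrite /E Dl !scalerDr addrACA !scalerA mulrC.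
have cE : forall x y, mul x (D y) + lambda *: mul x y = mul x (E y).
  by move=> x y; rewrite /E mrD mrZ.
have Ea : forall x, E (alpha x) = alpha (E x).
  by move=> x; rewrite /E Da aD aZ.
have Em : forall y z, E (mul y z) = mul (E y) z + mul y (D z).
  by move=> y z; rewrite /E Dm mlD mlZ addrAC.
have Eb : forall y z, E (br y z) = br (E y) z + br y (E z).
  move=> y z; rewrite /E Db blD brD blZ brZ.
  by rewrite -!addrA; congr (_ + _); rewrite addrCA.
have Pr : forall a b c, br (mul b c) (alpha a) = mul (alpha b) (br c a) + mul (alpha c) (br b a).
  by move=> a b c; rewrite bN hP opprD -!mrN -!bN.
split => //.
- split.
  + split=> a x y z; rewrite !cE.
      by rewrite mlD mlZ.
    by rewrite (lin_D El) (lin_Z El) mrD mrZ.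
  + done.
  + move=> x y z; rewrite !cE.
    have key : forall x y, mul (mul x (E y)) (E (alpha z)) - mul (alpha x) (E (mul y (E z)))
               = - mul (mul x y) (alpha (D (E z))).
      move=> u v; rewrite Ea -mA Em mrD opprD addrA subrr add0r mA.
      by rewrite -Da.
    by rewrite !key (mC x y).
  + move=> x y z; by rewrite !cE !Ea -!mA (mC (E y)).
- move=> x y z; rewrite !cE !Ea !Pr Eb mrD (mC (br x y)) (mC (br x z)).
  rewrite (bN (E z) y) mrN.
  set A := mul (alpha x) (br (E y) z).
  set B := mul (alpha (E y)) (br x z).
  set F := mul (alpha (E z)) (br x y).
  set G := mul (alpha x) (br y (E z)).
  by rewrite opprD opprK addrA subrK (addrAC A) (addrK B) subrr.
Qed.
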